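(* Let $H=(V,f)$ be a separated labeled hypergraph, let $W\subseteq V$ be the set of vertices of $H$ that are not closed, and let $H'=H|_W$ be the induced subhypergraph obtained by removing all closed vertices (and contracting the edges containing them). Then $\mathcal A[H]=k[H]$ if and only if $\mathcal A[H']=k[H']$.
   Context: Let $k$ be a field and $S=k[x_1,\dots,x_n,y]$. For an integral convex polytope $\mathcal P\subseteq\mathbb R^n_{\ge 0}$, the Ehrhart ring $\mathcal A[\mathcal P]$ is the $k$-subspace (a subalgebra) of $S$ spanned by the monomials $x^{\mathbf a}y^t$ with $t\in\mathbb N$ and $\mathbf a\in t\mathcal P\cap\mathbb Z^n$; the polytopal (toric) ring is $k[\mathcal P]=k[x^{\mathbf a}y:\mathbf a\in\mathcal P\cap\mathbb Z^n]\subseteq S$. A labeled hypergraph $H=(V,f)$ on a finite set $V$ with alphabet $\{x_1,\dots,x_n\}$ is a function $f:\{x_1,\dots,x_n\}\to\mathcal P(V)$; its edges are the nonempty sets in the image of $f$, and the labels of an edge $E$ are the $x$ with $f(x)=E$. $H$ is separated if for all distinct $v,w\in V$ there are edges $F,G$ with $v\in F\setminus G$, $w\in G\setminus F$. For separated $H$, let $m_v=\prod_{x:\,v\in f(x)}x=x^{\mathbf a_v}$ ($v\in V$), let $\mathcal P_H$ be the convex hull of $\{\mathbf a_v:v\in V\}$ (a 0-1 polytope), and set $\mathcal A[H]=\mathcal A[\mathcal P_H]$, $k[H]=k[\mathcal P_H]$. A vertex $v$ is closed if $\{v\}$ is an edge of $H$. For $W\subseteq V$, the induced subhypergraph is $H|_W=(W,f_W)$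 with $f_W(x)=f(x)\cap W$ (it is again separated). *)

(* Defs.v *)
From Stdlib Require Import List.
From HB Require Import structures.
From mathcomp Require Import all_boot all_order all_algebra.
Set Implicit Arguments. Unset Strict Implicit. Unset Printing Implicit Defensive.
Import Order.TTheory GRing.Theory Num.Theory.
Local Open Scope ring_scope.

(* A labeled hypergraph H = (V, f) with alphabet {x_1..x_n} (indexed by 'I_n)
   is a function f : 'I_n -> {set V}. *)

Definition is_edge (n : nat) (V : finType) (f : 'I_n -> {set V}) (E : {set V}) : Prop :=
  E != set0 /\ exists i : 'I_n, f i = E.

Definition separated (n : nat) (V : finType) (f : 'I_n -> {set V}) : Prop :=
  forall v w : V, v != w ->
    exists F G : {set V}, [/\ is_edge f F, is_edge f G,
      (v \in F) && (v \notin G) & (w \in G) && (w \notin F)].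

Definition closed_vertex (n : nat) (V : finType) (f : 'I_n -> {set V}) (v : V) : bool :=
  [exists i : 'I_n, f i == [set v]].

Definition nonclosed (n : nat) (V : finType) (f : 'I_n -> {set V}) : {set V} :=
  [set v | ~~ closed_vertex f v].

Definition induced (n : nat) (V : finType) (f : 'I_n -> {set V}) (W : {set V})
  : 'I_n -> {set {v : V | v \in W}} :=
  fun i => [set w : {v : V | v \in W} | val w \in f i].

(* exponent vector a_v of m_v = prod_{x : v \in f x} x *)
Definition vertex_vec (n : nat) (V : finType) (f : 'I_n -> {set V}) (v : V) : 'I_n -> nat :=
  fun i => nat_of_bool (v \in f i).

Definition in_dilate (R : realFieldType) (n : nat) (T : finType)
  (p : T -> 'I_n -> nat) (t : nat) (a : 'I_n -> nat) : Prop :=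
  exists lam : T -> R,
    [/\ forall v, 0 <= lam v,
        \sum_(v : T) lam v = t%:R
      & forall i : 'I_n, (a i)%:R = \sum_(v : T) lam v * (p v i)%:R].

(* Monomial x^a y^t lies in the Ehrhart ring A[P]. *)
Definition ehrhart_monomial (R : realFieldType) (n : nat) (T : finType)
  (p : T -> 'I_n -> nat) (t : nat) (a : 'I_n -> nat) : Prop :=
  in_dilate R p t a.

(* Monomial x^a y^t lies in the polytopal ring k[P] = k[x^b y : b \in P \cap Z^n],
   i.e. it is a product of t generators x^b y. *)
Definition toric_monomial (R : realFieldType) (n : nat) (T : finType)
  (p : T -> 'I_n -> nat) (t : nat) (a : 'I_n -> nat) : Prop :=
  exists s : seq ('I_n -> nat),
    [/\ size s = t, forall b, List.In b s -> in_dilate R p 1 b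
      & forall i : 'I_n, a i = (\sum_(b <- s) b i)%N].

(* A[P] = k[P]: both are k-spans of monomials, so they coincide iff they
   contain the same monomials. *)
Definition ehrhart_eq_toric (R : realFieldType) (n : nat) (T : finType)
  (p : T -> 'I_n -> nat) : Prop :=
  forall (t : nat) (a : 'I_n -> nat),
    ehrhart_monomial R p t a <-> toric_monomial R p t a.

(* Main.v *)
Require Import Defs.
From HB Require Import structures.
From mathcomp Require Import all_boot all_order all_algebra.
Set Implicit Arguments. Unset Strict Implicit. Unset Printing Implicit Defensive.
Import Order.TTheory GRing.Theory Num.Theory.

Section Gen.
Variables (R : realFieldType) (n : nat) (T : finType) (p : T -> 'I_n -> nat).
Local Open Scope ring_scope.

Lemma in_dilate_ext t a b : (forall i, a i = b i) -> in_dilate R p t a -> in_dilate R p t b.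
Proof. move=> e [lam [h1 h2 h3]]; exists lam; split=> // i; by rewrite -e. Qed.

Lemma in_dilate0 : in_dilate R p 0 (fun _ => 0%N).
Proof. exists (fun _ => 0); split=> //; first by rewrite big1.
by move=> i; rewrite big1 // => v _; rewrite mul0r. Qed.

Lemma in_dilate_add t1 t2 a1 a2 : in_dilate R p t1 a1 -> in_dilate R p t2 a2 ->
  in_dilate R p (t1 + t2) (fun i => a1 i + a2 i)%N.
Proof.
move=> [l1 [h1 h2 h3]] [l2 [g1 g2 g3]]; exists (fun v => l1 v + l2 v); split.
- by move=> v; rewrite addr_ge0.
- by rewrite big_split /= h2 g2 natrD.
- by move=> i; rewrite natrD h3 g3 -big_split /=; apply: eq_bigr => v _; rewrite mulrDl.
Qed.

Lemma toric_ehrhart t a : toric_monomial R p t a -> ehrhart_monomial R p t a.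
Proof.
move=> [s [hs hb ha]]; elim: s t a hs hb ha => [|b s IH] t a hs hb ha.
  rewrite /= in hs; subst t; apply: (in_dilate_ext _ in_dilate0) => i.
  by rewrite ha big_nil.
rewrite /= in hs; subst t.
have Hb : in_dilate R p 1 b by apply: hb; left.
have Hs : ehrhart_monomial R p (size s) (fun i => \sum_(c <- s) c i)%N.
  apply: IH => // c Hc; by apply: hb; right.
apply: (in_dilate_ext _ (in_dilate_add Hb Hs)) => i.
by rewrite ha big_cons.
Qed.

Lemma toric_ext t a b : (forall i, a i = b i) -> toric_monomial R p t a -> toric_monomial R p t b.
Proof. move=> e [s [h1 h2 h3]]; exists s; split=> // i; by rewrite -e. Qed.

Lemma toric_cat t1 t2 a1 a2 : toric_monomial R p t1 a1 -> toric_monomial R p t2 a2 ->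
  toric_monomial R p (t1 + t2) (fun i => a1 i + a2 i)%N.
Proof.
move=> [s1 [h1 h2 h3]] [s2 [g1 g2 g3]]; exists (s1 ++ s2); split.
- by rewrite size_cat h1 g1.
- by move=> b /List.in_app_iff [] ?; [apply: h2|apply: g2].
- by move=> i; rewrite big_cat h3 g3.
Qed.

Lemma toric_nseq c b : in_dilate R p 1 b -> toric_monomial R p c (fun i => c * b i)%N.
Proof.
move=> hb; elim: c => [|c IH].
  by exists [::]; split=> // i; rewrite big_nil.
have h1 : toric_monomial R p 1 b by exists [:: b]; split=> //= [c' [<-|[]]|i] //; rewrite big_cons big_nil addn0.
apply: (toric_ext _ (toric_cat h1 IH)) => i; by rewrite mulSn.
Qed.

Lemma in_sum_le (s : seq ('I_n -> nat)) b i : List.In b s -> (b i <= \sum_(c <- s) c i)%N.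
Proof.
elim: s => [|c s IH] //= [->|H]; rewrite big_cons; first exact: leq_addr.
by apply: leq_trans (IH H) _; apply: leq_addl.
Qed.

End Gen.


Section Hyp.
Variables (R : realFieldType) (n : nat) (V : finType) (f : 'I_n -> {set V}).
Local Open Scope ring_scope.
Let W := nonclosed f.
Let S := {v : V | v \in W}.
Let p := vertex_vec f.
Let p' := vertex_vec (induced f W).

Lemma p'E (w : S) i : p' w i = p (val w) i.
Proof. by rewrite /p' /p /vertex_vec /induced inE. Qed.

Lemma sum_restr (F : V -> R) : (forall v, v \notin W -> F v = 0) ->
  \sum_(v : V) F v = \sum_(w : S) F (val w).
Proof.
move=> h; rewrite (bigID (fun v => v \in W)) /= [X in _ + X]big1 ?addr0.
  by rewrite (big_sub W).
by move=> v /h.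
Qed.

Definition ext (lam : S -> R) (v : V) : R := if insub v is Some w then lam w else 0.

Lemma ext_val lam (w : S) : ext lam (val w) = lam w.
Proof. by rewrite /ext valK. Qed.

Lemma ext_out lam v : v \notin W -> ext lam v = 0.
Proof. by move=> h; rewrite /ext insubN. Qed.

Lemma closed_priv v : v \notin W -> exists i, forall u, p u i = (u == v) :> nat.
Proof.
rewrite /W /nonclosed inE negbK => /existsP [i /eqP hi].
by exists i => u; rewrite /p /vertex_vec hi in_set1.
Qed.

Lemma sum_priv (lam : V -> R) v i : (forall u, p u i = (u == v) :> nat) ->
  \sum_(u : V) lam u * (p u i)%:R = lam v.
Proof.
move=> h; rewrite (bigD1 v) //= h eqxx mulr1 big1 ?addr0 // => u /negbTE uv.
by rewrite h uv mulr0.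
Qed.

Lemma ehr_lift t a : in_dilate R p' t a -> in_dilate R p t a.
Proof.
move=> [lam [h1 h2 h3]]; exists (ext lam); split.
- by move=> v; rewrite /ext; case: insub.
- by rewrite -h2 (@sum_restr (fun v => ext lam v)); [apply: eq_bigr => w _; rewrite ext_val | move=> v /ext_out].
- move=> i; rewrite h3 (@sum_restr (fun v => ext lam v * (p v i)%:R)).
    by apply: eq_bigr => w _; rewrite ext_val p'E.
  by move=> v /ext_out ->; rewrite mul0r.
Qed.

Lemma ehr_restr t a (lam : V -> R) : (forall v, v \notin W -> lam v = 0) ->
  (forall v, 0 <= lam v) -> \sum_v lam v = t%:R ->
  (forall i, (a i)%:R = \sum_v lam v * (p v i)%:R) -> in_dilate R p' t a.
Proof.
move=> h0 h1 h2 h3; exists (fun w => lam (val w)); split => //.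
- by rewrite -h2 (@sum_restr lam).
- move=> i; rewrite h3 (@sum_restr (fun v => lam v * (p v i)%:R)).
    by apply: eq_bigr => w _; rewrite p'E.
  by move=> v /h0 ->; rewrite mul0r.
Qed.

Lemma dir1 : ehrhart_eq_toric R p -> ehrhart_eq_toric R p'.
Proof.
move=> H t a; split; last exact: toric_ehrhart.
move=> He; have := He => -[lam [h1 h2 h3]].
have [s [hs hb ha]] := (H t a).1 (ehr_lift He).
exists s; split => // b Hb.
have [mu [g1 g2 g3]] := hb b Hb.
apply: (ehr_restr (lam := mu)) => // v hv.
have [i hi] := closed_priv hv.
have ai0 : a i = 0%N.
  apply/eqP; rewrite -(eqr_nat R) h3 big1 // => w _.
  rewrite p'E hi; case: eqP => [e|_]; last by rewrite mulr0.
  by move: (valP w); rewrite e (negbTE hv).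
have bi0 : b i = 0%N.
  by apply/eqP; rewrite -leqn0 -ai0 ha; apply: in_sum_le.
by rewrite -(sum_priv mu hi) -g3 bi0.
Qed.


Lemma toric_lift t a : toric_monomial R p' t a -> toric_monomial R p t a.
Proof. move=> [s [h1 h2 h3]]; exists s; split=> // b /h2; exact: ehr_lift. Qed.

Lemma split_sum (lam : V -> R) v (G : V -> R) :
  \sum_u lam u * G u = lam v * G v + \sum_u (if u == v then 0 else lam u) * G u.
Proof.
rewrite (bigD1 v) //= [X in _ = _ + X](bigD1 v) //= eqxx mul0r add0r; congr (_ + _).
by apply: eq_bigr => u /negbTE ->.
Qed.

Lemma vert_in v : in_dilate R p 1 (p v).
Proof.
exists (fun u => if u == v then 1 else 0); split.
- by move=> u; case: eqP.
- by rewrite (bigD1 v) //= eqxx big1 ?addr0 // => u /negbTE ->.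
- move=> i; rewrite (bigD1 v) //= eqxx mul1r big1 ?addr0 // => u /negbTE ->.
  by rewrite mul0r.
Qed.

Lemma peel : ehrhart_eq_toric R p' -> forall (r : seq V) t a (lam : V -> R),
  (forall v, v \notin W -> v \notin r -> lam v = 0) -> (forall v, 0 <= lam v) ->
  \sum_v lam v = t%:R -> (forall i, (a i)%:R = \sum_v lam v * (p v i)%:R) ->
  toric_monomial R p t a.
Proof.
move=> H'; elim=> [|v r IH] t a lam h0 h1 h2 h3.
  apply: toric_lift; apply/(H' t a).1; apply: (ehr_restr (lam := lam)) => // v hv.
  exact: h0.
case hv: (v \in W).
  apply: (IH t a lam) => // u hu ur; apply (h0 u hu).
  rewrite in_cons negb_or ur andbT; apply/eqP => e; subst u.
  by rewrite hv in hu.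
have [i hi] := closed_priv (negbT hv).
set c := a i.
have lv : lam v = c%:R by rewrite /c h3 (sum_priv lam hi).
set lam2 := fun u => if u == v then 0 else lam u.
have l2pos : forall u, 0 <= lam2 u by move=> u; rewrite /lam2; case: eqP.
have ct : (c <= t)%N.
  rewrite -(ler_nat R) -h2 -lv.
  have := split_sum lam v (fun _ => 1); rewrite !(eq_bigr _ (fun u _ => mulr1 _)) mulr1 => ->.
  by rewrite lerDl; apply: sumr_ge0 => u _; case: eqP.
have ca : forall j, (c * p v j <= a j)%N.
  move=> j; rewrite -(ler_nat R) h3 (split_sum lam v) natrM -lv lerDl.
  by apply: sumr_ge0 => u _; apply: mulr_ge0 => //; case: eqP.
have T2 : toric_monomial R p (t - c) (fun j => a j - c * p v j)%N.
  apply: (IH _ _ lam2) => //.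
  - move=> u hu ur; rewrite /lam2; case: eqP => // /eqP uv; apply (h0 u hu).
    by rewrite in_cons negb_or ur andbT.
  - rewrite natrB // -h2 -lv.
    have := split_sum lam v (fun _ => 1); rewrite !(eq_bigr _ (fun u _ => mulr1 _)) mulr1 => ->.
    by rewrite [lam v + _]addrC addrK.
  - move=> j; rewrite natrB // h3 (split_sum lam v) natrM -lv [lam v * _ + _]addrC addrK.
    by [].
have T1 := toric_nseq c (vert_in v).
rewrite -(subnK ct); apply: (toric_ext _ (toric_cat T2 T1)) => j.
by rewrite subnK.
Qed.

Lemma dir2 : ehrhart_eq_toric R p' -> ehrhart_eq_toric R p.
Proof.
move=> H' t a; split; last exact: toric_ehrhart.
move=> [lam [h1 h2 h3]]; apply: (peel H' (r := enum V) (lam := lam)) => // v _.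
by rewrite mem_enum.
Qed.

End Hyp.

Theorem proposition3p3 (R : realFieldType) (n : nat) (V : finType)
  (f : 'I_n -> {set V}) :
  separated f ->
  (ehrhart_eq_toric R (vertex_vec f) <->
   ehrhart_eq_toric R (vertex_vec (induced f (nonclosed f)))).
Proof.
move=> _; split; [exact: dir1 | exact: dir2].
Qed.
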